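(* Let $a\ge 0$ and let $h$ be as defined in the context. Then for every $x\in[a-1,a+1]$, \[\log h(x)=\log h(a)+\sum_{k=1}^\infty\frac{(-1)^{k-1}}{k}\left(\sum_{n=2}^\infty\frac{u_n}{(n+a)^k}\right)(x-a)^k.\]
   Context: Let $u_n=(-1)^{s_2(n)}$, where $s_2(n)$ is the sum of the binary digits of the non-negative integer $n$ (Thue–Morse sequence with values $\pm1$). For real $x>-2$ define $h(x)=\prod_{n=1}^\infty\left(\frac{2n+x}{2n+1+x}\right)^{u_n}$ (limit of partial products; it converges and is positive). *)

(* Defs.v *)
From Stdlib Require Import Reals ZArith.
From Coquelicot Require Import Coquelicot.
Open Scope R_scope.

Fixpoint pos_popcount (p : positive) : nat :=
  match p with
  | xH => 1%nat
  | xO q => pos_popcount q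
  | xI q => S (pos_popcount q)
  end.

Definition s2 (n : nat) : nat :=
  match N.of_nat n with
  | N0 => 0%nat
  | Npos p => pos_popcount p
  end.

(* Thue--Morse sequence with values +-1 *)
Definition u (n : nat) : R := (-1) ^ (s2 n).

Fixpoint hpart (N : nat) (x : R) : R :=
  match N with
  | O => 1
  | S M => hpart M x *
      Rpower ((2 * INR (S M) + x) / (2 * INR (S M) + 1 + x)) (u (S M))
  end.

Definition h (x : R) : R := real (Lim_seq (fun N => hpart N x)).

(* Main.v *)
Require Import Defs.
From Stdlib Require Import Reals NArith Lia Lra.
From Coquelicot Require Import Coquelicot.
Open Scope R_scope.

Lemma series_lim (a : nat -> R) (l : R) :
  is_series a l <-> is_lim_seq (sum_n a) l.
Proof. split; intro H; exact H. Qed.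

Lemma u_even n : u (2 * n) = u n.
Proof.
  unfold u, s2. rewrite Nat2N.inj_double.
  destruct (N.of_nat n); reflexivity.
Qed.

Lemma u_odd n : u (S (2 * n)) = - u n.
Proof.
  unfold u, s2. rewrite Nat2N.inj_succ_double.
  destruct (N.of_nat n); simpl; ring.
Qed.

Lemma u_abs n : Rabs (u n) = 1.
Proof. apply pow_1_abs. Qed.

Lemma u_sum_odd (k : nat) : sum_f_R0 u (S (2 * k)) = 0.
Proof.
  induction k.
  - simpl. replace (u 0%nat) with (u (2*0)%nat) by reflexivity.
    replace (u 1%nat) with (u (S (2*0))%nat) by reflexivity.
    rewrite u_odd, u_even. ring.
  - replace (S (2 * S k)) with (S (S (S (2 * k)))) by lia.
    rewrite tech5, tech5, IHk.
    replace (S (S (2 * k))) with (2 * S k)%nat by lia.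
    replace (S (S (S (2 * k)))) with (S (2 * S k))%nat by lia.
    rewrite u_odd, u_even. ring.
Qed.

Lemma u_sum_bounded n : Rabs (sum_f_R0 u n) <= 1.
Proof.
  destruct (Nat.Even_or_Odd n) as [[k Hk]|[k Hk]].
  - destruct k.
    + subst. simpl. rewrite u_abs. lra.
    + replace n with (S (S (2 * k))) by lia. rewrite tech5, u_sum_odd.
      rewrite Rplus_0_l. rewrite u_abs. lra.
  - replace n with (S (2*k)) by lia. rewrite u_sum_odd, Rabs_R0. lra.
Qed.

Lemma telescope (b : nat -> R) (l : R) :
  is_lim_seq b l -> is_series (fun n => b n - b (S n)) (b O - l).
Proof.
  intro H. apply series_lim.
  apply is_lim_seq_ext with (fun n => b O - b (S n)).
  { intro n. rewrite sum_n_Reals. induction n; simpl.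
    - ring.
    - rewrite <- IHn. ring. }
  apply (is_lim_seq_minus' (fun _ => b O) (fun n => b (S n))).
  apply is_lim_seq_const. now apply is_lim_seq_incr_1 in H.
Qed.

Lemma dirichlet_u (a : nat -> R) :
  is_lim_seq a 0 -> (forall n, a (S (S n)) <= a (S n)) ->
  ex_series (fun n => a n * u n).
Proof.
  intros Hl Hm.
  apply (partial_summation_R a u).
  - exists 1. intro n. rewrite sum_n_Reals. apply u_sum_bounded.
  - exact Hl.
  - apply ex_series_incr_1.
    apply ex_series_ext with (fun n => a (S n) - a (S (S n))).
    { intro n. unfold norm, minus, plus, opp; simpl. unfold abs; simpl.
      rewrite Rabs_left1. ring. specialize (Hm n). lra. }
    eexists. apply (telescope (fun n => a (S n)) 0). now apply is_lim_seq_incr_1 in Hl.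
Qed.

Definition PT (J : nat) (z : R) : R :=
  sum_f_R0 (fun j => (-1) ^ j / INR (S j) * z ^ (S j)) J.

Lemma negpow z k : (-z) ^ k = (-1) ^ k * z ^ k.
Proof. replace (-z) with (-1 * z) by ring. apply Rpow_mult_distr. Qed.

Lemma PT_derive J z : is_derive (PT J) z (sum_f_R0 (fun j => (-z) ^ j) J).
Proof.
  assert (Ht : forall k, is_derive (fun z => (-1) ^ k / INR (S k) * z ^ (S k)) z ((-z) ^ k)).
  { intro k. 
    assert (H := is_derive_scal (fun z => z ^ (S k)) z ((-1) ^ k / INR (S k)) _
                   (is_derive_pow (fun t => t) (S k) z 1 (is_derive_id z))).
    replace ((-z)^k) with ((-1) ^ k / INR (S k) * (INR (S k) * 1 * z ^ Init.Nat.pred (S k))).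
    exact H.
    rewrite negpow. simpl Init.Nat.pred. field. apply not_0_INR. lia. }
  induction J.
  - unfold PT. exact (Ht 0%nat).
  - unfold PT. simpl sum_f_R0. 
    apply (is_derive_plus (fun z => sum_f_R0 (fun j => (-1) ^ j / INR (S j) * z ^ (S j)) J)
             (fun z => (-1) ^ (S J) / INR (S (S J)) * z ^ (S (S J)))).
    apply IHJ. apply Ht.
Qed.

Lemma geom_sum J z : (1 + z) * sum_f_R0 (fun j => (-z) ^ j) J = 1 - (-z) ^ (S J).
Proof.
  induction J; simpl.
  - ring.
  - rewrite Rmult_plus_distr_l, IHJ. simpl. ring.
Qed.

Lemma PT_0 J : PT J 0 = 0.
Proof.
  unfold PT. induction J. simpl. ring. rewrite tech5, IHJ. simpl. ring.
Qed.

Lemma log_taylor J z : Rabs z <= /2 ->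
  Rabs (ln (1 + z) - PT J z) <= 2 * Rabs z ^ (S (S J)).
Proof.
  intro Hz.
  set (F := fun t => ln (1 + t) - PT J t).
  assert (HD : forall c, Rabs (c - 0) <= /2 ->
     is_derive F c ((-c) ^ (S J) / (1 + c))).
  { intros c Hc. rewrite Rminus_0_r in Hc.
    assert (Hc1 : 0 < 1 + c) by (apply Rabs_le_between in Hc; lra).
    unfold F.
    replace ((-c) ^ (S J) / (1 + c)) with (minus (1 * / (1 + c)) (sum_f_R0 (fun j => (-c) ^ j) J)).
    apply (is_derive_minus (fun t => ln (1 + t)) (PT J)).
    - apply (is_derive_comp ln (fun t => 1 + t)).
      apply is_derive_ln. exact Hc1.
      auto_derive. auto. ring.
    - apply PT_derive.
    - unfold minus, plus, opp; simpl.
      apply (Rmult_eq_reg_l (1 + c)); [| lra].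
      rewrite Rmult_plus_distr_l. rewrite Ropp_mult_distr_r_reverse, geom_sum. simpl. field. lra. }
  destruct (MVT_cor4 F (fun c => (-c) ^ (S J) / (1 + c)) 0 (/2) HD z)
    as [c [Hc1 Hc2]].
  { rewrite Rminus_0_r. exact Hz. }
  assert (HF0 : F 0 = 0).
  { unfold F. rewrite PT_0, Rplus_0_r, ln_1. ring. }
  fold (F z). rewrite Rminus_0_r in Hc1, Hc2.
  rewrite HF0, Rminus_0_r in Hc1. rewrite Hc1.
  rewrite Rminus_0_r in Hc2. assert (Hc3 : -/2 <= c <= /2) by (apply Rabs_le_between; lra).
  rewrite Rabs_mult, Rabs_div by lra.
  rewrite <- RPow_abs, Rabs_Ropp.
  rewrite (Rabs_right (1 + c)) by lra.
  simpl pow.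
  assert (Hcz : Rabs c ^ J <= Rabs z ^ J) by (apply pow_incr; split; [apply Rabs_pos | lra]).
  assert (0 <= Rabs c ^ J) by (apply pow_le, Rabs_pos).
  assert (0 <= Rabs z) by apply Rabs_pos.
  assert (0 <= Rabs c) by apply Rabs_pos.
  unfold Rdiv.
  apply Rle_trans with (Rabs c * Rabs c ^ J * 2 * Rabs z).
  - apply Rmult_le_compat_r; [lra|]. apply Rmult_le_compat_l. 
    apply Rmult_le_pos; lra.
    rewrite <- (Rinv_inv 2). apply Rinv_le_contravar; lra.
  - assert (Rabs c * Rabs c ^ J <= Rabs z * Rabs z ^ J).
    { apply Rmult_le_compat; lra. }
    nra.
Qed.

Lemma exR_scal c (a : nat -> R) : ex_series a -> ex_series (fun n => c * a n).
Proof. intro H. exact (ex_series_scal_l c a H). Qed.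
Lemma exR_plus (a b : nat -> R) : ex_series a -> ex_series b -> ex_series (fun n => a n + b n).
Proof. intros H1 H2. exact (ex_series_plus a b H1 H2). Qed.
Lemma exR_minus (a b : nat -> R) : ex_series a -> ex_series b -> ex_series (fun n => a n - b n).
Proof. intros H1 H2. exact (ex_series_minus a b H1 H2). Qed.
Lemma exR_le (a b : nat -> R) : (forall n, Rabs (a n) <= b n) -> ex_series b -> ex_series a.
Proof. intros H1 H2. apply (@ex_series_le R_AbsRing R_CompleteNormedModule a b); auto. Qed.
Lemma exR_abs_le (a b : nat -> R) : (forall n, Rabs (a n) <= b n) -> ex_series b ->
  ex_series (fun n => Rabs (a n)).
Proof. intros H1 H2. apply (@ex_series_le R_AbsRing R_CompleteNormedModule _ b); auto. intro n.
  unfold norm; simpl; unfold abs; simpl. rewrite Rabs_Rabsolu. auto. Qed.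

Lemma inv_lim c : 0 < c -> is_lim_seq (fun n => / (INR n + c)) 0.
Proof.
  intro Hc.
  assert (H : is_lim_seq (fun n => INR n + c) p_infty).
  { apply (is_lim_seq_plus _ _ p_infty c). apply is_lim_seq_INR.
    apply is_lim_seq_const. simpl. constructor. }
  apply (is_lim_seq_inv _ _ H). discriminate.
Qed.

Definition w (m : nat) : R := / (INR m + 1) - / (INR (S m) + 1).

Lemma w_ex : ex_series w.
Proof.
  eexists. apply (telescope (fun m => / (INR m + 1)) 0). apply inv_lim. lra.
Qed.

Lemma w_bound m e : INR m + 2 <= e -> / e ^ 2 <= w m.
Proof.
  intro He. unfold w. rewrite S_INR.
  assert (0 <= INR m) by apply pos_INR.
  replace (/ (INR m + 1) - / (INR m + 1 + 1)) with (/ ((INR m + 1) * (INR m + 2))) by (field; lra).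
  apply Rinv_le_contravar. nra. simpl. nra.
Qed.

Lemma pairs_series (b : nat -> R) l : is_series b l ->
  is_series (fun p => b (2 * p)%nat + b (S (2 * p))) l.
Proof.
  intro H. apply series_lim. apply series_lim in H.
  apply is_lim_seq_ext with (fun p => sum_n b (S (2 * p))).
  { intro p. rewrite !sum_n_Reals. induction p.
    - simpl. ring.
    - replace (S (2 * S p)) with (S (S (S (2 * p)))) by lia.
      rewrite tech5, tech5, IHp. rewrite (tech5 _ p).
      replace (S (S (2 * p))) with (2 * S p)%nat by lia.
      replace (S (S (S (2 * p)))) with (S (2 * S p))%nat by lia. ring. }
  apply (is_lim_seq_subseq (sum_n b) l (fun p => S (2 * p))).
  apply eventually_subseq. intro n. lia. exact H.
Qed.

Lemma ln1p_bounds z : 0 < z -> 0 <= ln (1 + z) <= z.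
Proof.
  intro Hz. split.
  - rewrite <- ln_1. apply ln_le; lra.
  - left. apply (Rlt_le_trans _ (ln (exp z))). apply ln_increasing. lra. apply exp_ineq1. lra. rewrite ln_exp. lra.
Qed.

Definition Fh (y : R) (p : nat) : R :=
  u (S p) * ln ((2 * INR (S p) + y) / (2 * INR (S p) + 1 + y)).

Lemma hpart_exp y n : hpart (S n) y = exp (sum_f_R0 (Fh y) n).
Proof.
  induction n.
  - simpl hpart. simpl sum_f_R0. unfold Fh, Rpower. rewrite Rmult_1_l. reflexivity.
  - change (hpart (S (S n)) y) with
      (hpart (S n) y * Rpower ((2 * INR (S (S n)) + y) / (2 * INR (S (S n)) + 1 + y)) (u (S (S n)))).
    rewrite IHn. unfold Rpower. rewrite tech5, exp_plus. reflexivity.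
Qed.

Lemma Fh_ex y : -1 <= y -> ex_series (Fh y).
Proof.
  intro Hy.
  set (a := fun n => ln (1 + / (2 * INR n + y))).
  assert (Hpos : forall n, 1 <= 2 * INR (S n) + y).
  { intro n. rewrite S_INR. assert (0 <= INR n) by apply pos_INR. lra. }
  assert (Ha : ex_series (fun n => a n * u n)).
  { apply dirichlet_u.
    - apply is_lim_seq_incr_1.
      apply is_lim_seq_le_le with (fun _ => 0) (fun n => / (INR n + 1)).
      + intro n. unfold a. 
        assert (H1 := Hpos n).
        assert (H2 : 0 < / (2 * INR (S n) + y)) by (apply Rinv_0_lt_compat; lra).
        destruct (ln1p_bounds _ H2). split; auto.
        apply Rle_trans with (1 := H0). apply Rinv_le_contravar.
        assert (0 <= INR n) by apply pos_INR. lra.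
        assert (0 <= INR n) by apply pos_INR. rewrite S_INR. lra.
      + apply is_lim_seq_const.
      + apply inv_lim. lra.
    - intro n. unfold a. 
      assert (H1 := Hpos n). assert (H3 := Hpos (S n)).
      apply ln_le.
      assert (0 < / (2 * INR (S (S n)) + y)) by (apply Rinv_0_lt_compat; lra). lra.
      apply Rplus_le_compat_l. apply Rinv_le_contravar. lra.
      rewrite (S_INR (S n)). lra. }
  apply ex_series_incr_1 in Ha.
  apply (exR_scal (-1)) in Ha.
  apply ex_series_ext with (2 := Ha).
  intro n. unfold Fh, a. simpl (fun k => _) .
  assert (H1 := Hpos n).
  assert (H2 : 0 < / (2 * INR (S n) + y)) by (apply Rinv_0_lt_compat; lra).
  replace ((2 * INR (S n) + y) / (2 * INR (S n) + 1 + y)) with (/ (1 + / (2 * INR (S n) + y))).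
  - rewrite (ln_Rinv (1 + / (2 * INR (S n) + y))) by lra. change (@eq R (-1 * (ln (1 + / (2 * INR (S n) + y)) * u (S n))) (u (S n) * - ln (1 + / (2 * INR (S n) + y)))). ring.
  - change (@eq R (/ (1 + / (2 * INR (S n) + y))) ((2 * INR (S n) + y) / (2 * INR (S n) + 1 + y))). field. lra.
Qed.

Lemma h_exp y : -1 <= y -> h y = exp (Series (Fh y)).
Proof.
  intro Hy.
  unfold h. rewrite <- Lim_seq_incr_1.
  rewrite (Lim_seq_ext _ (fun n => exp (sum_f_R0 (Fh y) n))) by (intro; apply hpart_exp).
  rewrite (is_lim_seq_unique _ (exp (Series (Fh y)))). reflexivity.
  apply (filterlim_comp _ _ _ (sum_f_R0 (Fh y)) exp eventually (locally (Series (Fh y)))).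
  - assert (H := Series_correct _ (Fh_ex y Hy)).
    apply series_lim in H.
    apply (filterlim_ext (sum_n (Fh y))). intro; apply sum_n_Reals. exact H.
  - apply continuous_exp.
Qed.

Lemma INR_m2 m : INR (m + 2) = INR m + 2.
Proof. rewrite plus_INR. simpl. ring. Qed.

Lemma dd_ge a m : 0 <= a -> INR m + 2 <= INR (m + 2) + a.
Proof. intro. rewrite INR_m2. lra. Qed.

Lemma coef_ex a k : 0 <= a -> (1 <= k)%nat ->
  ex_series (fun m => u (m + 2) / (INR (m + 2) + a) ^ k).
Proof.
  intros Ha Hk.
  destruct (Nat.eq_dec k 1) as [->|Hk2].
  - assert (H : ex_series (fun n => / (INR n + a) * u n)).
    { apply dirichlet_u.
      - apply is_lim_seq_incr_1.
        apply is_lim_seq_ext with (fun n => / (INR n + (1 + a))).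
        intro n. rewrite S_INR. f_equal. ring.
        apply inv_lim. lra.
      - intro n. assert (0 <= INR n) by apply pos_INR.
        apply Rinv_le_contravar. rewrite S_INR. lra. rewrite !S_INR. lra. }
    apply (ex_series_incr_n _ 2) in H.
    apply ex_series_ext with (2 := H). intro n.
    rewrite (Nat.add_comm 2 n). change (@eq R (/ (INR (n + 2) + a) * u (n + 2)) (u (n + 2) / (INR (n + 2) + a) ^ 1)).
    rewrite pow_1. unfold Rdiv. ring.
  - apply exR_le with w. 2: apply w_ex.
    intro m. assert (Hd := dd_ge a m Ha).
    assert (0 <= INR m) by apply pos_INR.
    unfold Rdiv. rewrite Rabs_mult, u_abs, Rmult_1_l.
    rewrite Rabs_right.
    2: { left. apply Rinv_0_lt_compat. apply pow_lt. lra. }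
    apply Rle_trans with (/ (INR (m + 2) + a) ^ 2).
    + apply Rinv_le_contravar. apply pow_lt; lra.
      apply Rle_pow. lra. lia.
    + apply w_bound. exact Hd.
Qed.

Definition dd (a : R) (m : nat) : R := INR (m + 2) + a.
Definition GG (a x : R) (m : nat) : R := u (m + 2) * (ln (INR (m + 2) + x) - ln (dd a m)).
Definition EE (a x : R) (J m : nat) : R :=
  u (m + 2) * ((ln (INR (m + 2) + x) - ln (dd a m)) - PT J ((x - a) / dd a m)).
Definition QQ (a x : R) (J m : nat) : R := u (m + 2) * PT J ((x - a) / dd a m).
Definition TT (a x : R) (j : nat) : R :=
  (-1) ^ j / INR (S j) *
  Series (fun m : nat => u (m + 2) / (INR (m + 2) + a) ^ (S j)) * (x - a) ^ (S j).

Section Main.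
Variables a x : R.
Hypothesis ha : 0 <= a.
Hypothesis hx : a - 1 <= x <= a + 1.

Lemma dd_pos m : 2 <= dd a m.
Proof. unfold dd. assert (H := dd_ge a m ha). assert (0 <= INR m) by apply pos_INR. lra. Qed.

Lemma g_eq m : ln (INR (m + 2) + x) - ln (dd a m) = ln (1 + (x - a) / dd a m).
Proof.
  assert (H := dd_pos m). unfold dd in *.
  rewrite <- ln_div by lra. f_equal. field. lra.
Qed.

Lemma E_bound J m : Rabs (EE a x J m) <= 2 * (/ 2) ^ J * w m.
Proof.
  assert (H := dd_pos m).
  unfold EE. rewrite Rabs_mult, u_abs, Rmult_1_l, g_eq.
  set (z := (x - a) / dd a m).
  assert (Hz : Rabs z <= / dd a m).
  { unfold z, Rdiv. rewrite Rabs_mult, (Rabs_right (/ dd a m)).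
    2: { left; apply Rinv_0_lt_compat; lra. }
    assert (Rabs (x - a) <= 1) by (apply Rabs_le_between; lra).
    assert (0 < / dd a m) by (apply Rinv_0_lt_compat; lra). nra. }
  assert (Hd2 : / dd a m <= / 2) by (apply Rinv_le_contravar; lra).
  apply Rle_trans with (1 := log_taylor J z ltac:(lra)).
  assert (Hw : / dd a m ^ 2 <= w m) by (apply w_bound; apply dd_ge; auto).
  assert (0 <= Rabs z) by apply Rabs_pos.
  assert (H1 : Rabs z ^ J <= (/ 2) ^ J) by (apply pow_incr; lra).
  assert (H2 : Rabs z ^ 2 <= / dd a m ^ 2).
  { rewrite <- pow_inv. apply pow_incr; lra. }
  replace (Rabs z ^ S (S J)) with (Rabs z ^ J * Rabs z ^ 2) by (simpl; ring).
  assert (0 <= Rabs z ^ J) by (apply pow_le; lra).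
  assert (0 <= Rabs z ^ 2) by (apply pow_le; lra).
  assert (0 <= (/2) ^ J) by (apply pow_le; lra).
  assert (Rabs z ^ J * Rabs z ^ 2 <= (/ 2) ^ J * w m).
  { apply Rmult_le_compat; lra. }
  lra.
Qed.

Lemma EE_ex J : ex_series (EE a x J).
Proof.
  apply exR_le with (fun m => 2 * (/ 2) ^ J * w m).
  apply E_bound. apply exR_scal. apply w_ex.
Qed.

Lemma term_eq j :
  ex_series (fun m => u (m + 2) * ((-1) ^ j / INR (S j) * ((x - a) / dd a m) ^ (S j))) /\
  Series (fun m => u (m + 2) * ((-1) ^ j / INR (S j) * ((x - a) / dd a m) ^ (S j))) = TT a x j.
Proof.
  assert (Hext : forall m, u (m + 2) * ((-1) ^ j / INR (S j) * ((x - a) / dd a m) ^ (S j))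
     = ((-1) ^ j / INR (S j) * (x - a) ^ (S j)) * (u (m + 2) / (INR (m + 2) + a) ^ (S j))).
  { intro m. assert (H := dd_pos m). unfold dd in *. unfold Rdiv.
    rewrite Rpow_mult_distr, pow_inv. ring. }
  split.
  - apply ex_series_ext with (fun m => ((-1) ^ j / INR (S j) * (x - a) ^ (S j)) * (u (m + 2) / (INR (m + 2) + a) ^ (S j))).
    intro m. symmetry. apply Hext.
    apply exR_scal. apply coef_ex; auto. lia.
  - rewrite (Series_ext _ _ Hext). rewrite Series_scal_l. unfold TT. ring.
Qed.

Lemma Q_ind J : ex_series (QQ a x J) /\ sum_f_R0 (TT a x) J = Series (QQ a x J).
Proof.
  induction J.
  - destruct (term_eq 0) as [H1 H2]. split.
    + exact H1.
    + simpl. rewrite <- H2. reflexivity.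
  - destruct IHJ as [H1 H2]. destruct (term_eq (S J)) as [H3 H4].
    assert (Hext : forall m, QQ a x (S J) m = QQ a x J m +
       u (m + 2) * ((-1) ^ (S J) / INR (S (S J)) * ((x - a) / dd a m) ^ (S (S J)))).
    { intro m. unfold QQ, PT. rewrite tech5. ring. }
    split.
    + apply ex_series_ext with (1 := fun m => eq_sym (Hext m)).
      apply exR_plus; auto.
    + rewrite (Series_ext _ _ Hext), Series_plus by auto.
      rewrite tech5, H2, H4. reflexivity.
Qed.
End Main.

Lemma exR_ext (a b : nat -> R) : (forall n, a n = b n) -> ex_series a -> ex_series b.
Proof. intros H1 H2. exact (ex_series_ext a b H1 H2). Qed.
Lemma isR_ext (a b : nat -> R) l : (forall n, a n = b n) -> is_series a l -> is_series b l.
Proof. intros H1 H2. exact (is_series_ext a b l H1 H2). Qed.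

Lemma lim_aux D c q : Rabs q < 1 -> is_lim_seq (fun n => D + c * q ^ n) D.
Proof.
  intro Hq.
  assert (H := is_lim_seq_plus' (fun _ => D) (fun n => c * q ^ n) D (c * 0)
     (is_lim_seq_const D) (is_lim_seq_scal_l _ c 0 (is_lim_seq_geom q Hq))).
  rewrite Rmult_0_r, Rplus_0_r in H. exact H.
Qed.

Theorem theorem5 (a x : R) (ha : 0 <= a) (hx : a - 1 <= x <= a + 1) :
  (forall k : nat, (1 <= k)%nat ->
     ex_series (fun m : nat => u (m + 2) / (INR (m + 2) + a) ^ k)) /\
  is_series
    (fun j : nat =>
       (-1) ^ j / INR (S j) *
       Series (fun m : nat => u (m + 2) / (INR (m + 2) + a) ^ (S j)) *
       (x - a) ^ (S j))
    (ln (h x) - ln (h a)).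
Proof.
  split.
  { intros k Hk. apply coef_ex; auto. }
  change (is_series (TT a x) (ln (h x) - ln (h a))).
  assert (HG : ex_series (GG a x)).
  { destruct (Q_ind a x ha 0) as [HQ _].
    apply exR_ext with (fun m => QQ a x 0 m + EE a x 0 m).
    intro m. unfold QQ, EE, GG. ring.
    apply exR_plus. exact HQ. apply EE_ex; auto. }
  set (D := Series (GG a x)).
  assert (HW := w_ex).
  set (W := Series w).
  assert (HQE : forall J, sum_f_R0 (TT a x) J = D - Series (EE a x J)).
  { intro J. destruct (Q_ind a x ha J) as [HQ HS]. rewrite HS.
    unfold D. rewrite <- Series_minus by (auto; apply EE_ex; auto).
    apply Series_ext. intro m. unfold QQ, EE, GG. ring. }
  assert (HEb : forall J, Rabs (Series (EE a x J)) <= 2 * W * (/ 2) ^ J).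
  { intro J.
    assert (Hb := E_bound a x ha hx J).
    apply Rle_trans with (Series (fun m => Rabs (EE a x J m))).
    apply Series_Rabs. apply exR_abs_le with (fun m => 2 * (/ 2) ^ J * w m). auto.
    apply exR_scal; auto.
    apply Rle_trans with (Series (fun m => 2 * (/ 2) ^ J * w m)).
    apply Series_le. intro m. split. apply Rabs_pos. auto. apply exR_scal; auto.
    rewrite Series_scal_l. unfold W. right. ring. }
  assert (HT : is_series (TT a x) D).
  { apply series_lim.
    apply is_lim_seq_le_le with (fun J => D + (- (2 * W)) * (/ 2) ^ J)
                                (fun J => D + (2 * W) * (/ 2) ^ J).
    - intro J. rewrite sum_n_Reals, HQE. specialize (HEb J).
      apply Rabs_le_between in HEb. lra.
    - apply lim_aux. rewrite Rabs_right; lra.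
    - apply lim_aux. rewrite Rabs_right; lra. }
  replace (ln (h x) - ln (h a)) with D. exact HT.
  rewrite (h_exp x) by lra. rewrite (h_exp a) by lra. rewrite !ln_exp.
  rewrite <- Series_minus by (apply Fh_ex; lra).
  symmetry. apply is_series_unique.
  assert (HP := pairs_series (GG a x) D (Series_correct _ HG)).
  apply isR_ext with (2 := HP).
  intro p.
  assert (Hp : 0 <= INR p) by apply pos_INR.
  unfold GG, Fh, dd.
  replace (2 * p + 2)%nat with (2 * S p)%nat by lia.
  replace (S (2 * p) + 2)%nat with (S (2 * S p))%nat by lia.
  rewrite u_even, u_odd.
  replace (INR (2 * S p)) with (2 * INR (S p)) by (rewrite mult_INR; simpl; ring).
  replace (INR (S (2 * S p))) with (2 * INR (S p) + 1) by (rewrite (S_INR (2 * S p)), mult_INR; simpl; ring).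
  rewrite S_INR in *.
  rewrite !ln_div by lra.
  replace (2 * (INR p + 1) + 1 + x) with (2 * (INR p + 1) + x + 1) by ring.
  replace (2 * (INR p + 1) + 1 + a) with (2 * (INR p + 1) + a + 1) by ring.
  ring.
Qed.
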